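(* Consider the problem and the UCGS iterates described in the context, and suppose the parameters satisfy $\beta_k\ge L_k\gamma_k$ for all $k$. Then for every $k\ge1$ and every $x\in X$, $$f(y_k)-\ell_k(x)\le\frac{\varepsilon}{2}+\Gamma_k\sum_{i=1}^k\frac{\gamma_i\beta_i}{2\Gamma_i}\big(\|x-x_{i-1}\|^2-\|x-x_i\|^2\big)+\Gamma_k\sum_{i=1}^k\frac{\gamma_i\eta_i}{\Gamma_i},$$ where $\ell_k(x):=\Gamma_k\sum_{i=1}^k\frac{\gamma_i}{\Gamma_i}\big(f(z_i)+\langle\nabla f(z_i),x-z_i\rangle\big)$.
   Context: Problem: $\min_{x\in X}f(x)$, where $X\subset\mathbb{R}^n$ is nonempty, compact, convex (Euclidean norm), and $f$ is convex and differentiable. ACGM procedure with input $(g,u,\beta,\eta)$, $u\in X$: with $\phi(x)=\langle g,x\rangle+\frac\beta2\|x-u\|^2$, set $u^0=u$; for $t=1,2,\dots$ compute $v^t\in X$ with $\langle\nabla\phi(u^{t-1}),v^t-x\rangle\le\delta^t$ for all $x\in X$; if $\langle\nabla\phi(u^{t-1}),u^{t-1}-v^t\rangle\le\eta-\delta^t$ output $u^{t-1}$, else $u^t=(1-\alpha^t)u^{t-1}+\alpha^tv^t$, $\alpha^t\in[0,1]$. UCGS iterates with accuracy $\varepsilon>0$, start $x_0\in X$, $y_0:=x_0$, positive parameters $\beta_k,\eta_k$: at outer iteration $k=1,2,\dots$, with the accepted value $L_k>0$, $\gamma_1=1$ and, for $k\ge2$, $\gamma_k\in(0,1]$ solves $L_k\gamma_k^2/k=\Gamma_{k-1}(1-\gamma_k)$;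 $\Gamma_k:=L_k\gamma_k^2/k$ (so $\Gamma_k=(1-\gamma_k)\Gamma_{k-1}$ for $k\ge2$); $z_k=(1-\gamma_k)y_{k-1}+\gamma_kx_{k-1}$; $x_k:=$ output of ACGM with $g=\nabla f(z_k)$, $u=x_{k-1}$, $\beta=\beta_k$, $\eta=\eta_k$; $y_k=(1-\gamma_k)y_{k-1}+\gamma_kx_k$; and $L_k$ is such that $f(y_k)\le f(z_k)+\langle\nabla f(z_k),y_k-z_k\rangle+\frac{L_k}{2}\|y_k-z_k\|^2+\frac{\varepsilon}{2}\gamma_k$. *)

(* Defs.v *)
From HB Require Import structures.
From mathcomp Require Import all_boot all_order all_algebra.
From mathcomp Require Import all_classical all_reals.
From mathcomp Require Import topology normedtype derive convex.
Set Implicit Arguments. Unset Strict Implicit. Unset Printing Implicit Defensive.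
Import Order.TTheory GRing.Theory Num.Theory.
Import numFieldNormedType.Exports.
Local Open Scope classical_set_scope.
Local Open Scope ring_scope.

Definition dotv {R : realType} {n : nat} (u v : 'rV[R]_n) : R :=
  \sum_(i < n) u 0 i * v 0 i.
Definition sqnorm {R : realType} {n : nat} (u : 'rV[R]_n) : R := dotv u u.

(* ACGM procedure with input (g, u, beta, eta): phi(x) = <g,x> + beta/2 ||x-u||^2,
   so grad phi(w) = g + beta (w - u).  [ACGM_output X g u beta eta out] means that
   some admissible run of the procedure (choices of v^t, delta^t, alpha^t)
   terminates and outputs [out]. *)
Definition ACGM_output {R : realType} {n : nat} (X : set 'rV[R]_n)
  (g u : 'rV[R]_n) (beta eta : R) (out : 'rV[R]_n) : Prop :=
  let gphi := fun w : 'rV[R]_n => g + beta *: (w - u) in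
  exists (T : nat) (us vs : nat -> 'rV[R]_n) (delta alpha : nat -> R),
    [/\ (0 < T)%N /\ us 0%N = u,
     (forall t, (1 <= t <= T)%N ->
        X (vs t) /\ forall x, X x -> dotv (gphi (us t.-1)) (vs t - x) <= delta t),
     (forall t, (1 <= t < T)%N ->
        [/\ eta - delta t < dotv (gphi (us t.-1)) (us t.-1 - vs t),
            0 <= alpha t <= 1 &
            us t = (1 - alpha t) *: us t.-1 + alpha t *: vs t]),
     dotv (gphi (us T.-1)) (us T.-1 - vs T) <= eta - delta T &
     out = us T.-1].

Definition Gam {R : realType} (L gam : nat -> R) (k : nat) : R :=
  L k * gam k ^+ 2 / k%:R.

(* Main.v *)
Require Import Defs.
From HB Require Import structures.
From mathcomp Require Import all_boot all_order all_algebra.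
From mathcomp Require Import all_classical all_reals.
From mathcomp Require Import topology normedtype derive convex.
From mathcomp Require Import ring lra.
Import Order.TTheory GRing.Theory Num.Theory.
Import numFieldNormedType.Exports.
Local Open Scope classical_set_scope.
Local Open Scope ring_scope.
Local Open Scope convex_scope.

Section S.
Context {R : realType} {n : nat}.
Implicit Types (a b c g p q u v x y z : 'rV[R]_n).

Ltac ptw := rewrite /sqnorm /dotv;
  do 3 (rewrite ?mulr_sumr -?sumrN -?big_split /=); apply: eq_bigr => i _; rewrite !mxE; ring.

Lemma dotv_split a b c x : dotv a (b - c) + dotv a (c - x) = dotv a (b - x).
Proof. ptw. Qed.

Lemma dotv_gphi g p q (b : R) : dotv (g + b *: p) q = dotv g q + b * dotv p q.
Proof. ptw. Qed.

Lemma sqnorm_ge0 p : 0 <= sqnorm p.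
Proof. apply: sumr_ge0 => i _; rewrite -expr2; exact: sqr_ge0. Qed.

Lemma sqnormZ (r : R) p : sqnorm (r *: p) = r ^+ 2 * sqnorm p.
Proof. ptw. Qed.

Lemma three_pt x x' u : 2 * dotv (x - x') (x - u) = sqnorm (u - x) + sqnorm (x - x') - sqnorm (u - x').
Proof. ptw. Qed.

Lemma dot_decomp g y' x u z (r : R) :
  dotv g ((1 - r) *: y' + r *: x - z) = (1 - r) * dotv g (y' - z) + r * (dotv g (x - u) + dotv g (u - z)).
Proof. ptw. Qed.

Lemma vec_diff y' x x' (r : R) : (1 - r) *: y' + r *: x - ((1 - r) *: y' + r *: x') = r *: (x - x').
Proof. apply/rowP => i; rewrite !mxE; ring. Qed.

Lemma ACGM_ineq {X : set 'rV[R]_n} {g u0 : 'rV[R]_n} {beta eta : R} {out : 'rV[R]_n} :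
  ACGM_output X g u0 beta eta out ->
  forall u, X u -> dotv g (out - u) + beta * dotv (out - u0) (out - u) <= eta.
Proof.
move=> [T [us [vs [delta [alpha [[T0 us0] Hv _ Hlast ->]]]]]] w Xw.
have [_ Hw] := Hv T (ltac:(by rewrite T0 leqnn)).
have := Hw w Xw; rewrite /= in Hlast * => H1.
rewrite -dotv_gphi -(dotv_split _ _ (vs T)).
lra.
Qed.
End S.

Lemma grad_ineq (R : realType) n (f : 'rV[R]_n -> R) (gradf : 'rV[R]_n -> 'rV[R]_n) :
  convex_function setT f -> (forall w, differentiable f w) ->
  (forall w v, 'D_v f w = dotv (gradf w) v) ->
  forall w v, f w + dotv (gradf w) (v - w) <= f v.
Proof.
move=> cf df Df w v; rewrite -Df.
set d := v - w.
have der : derivable f w d by apply: diff_derivable.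
have cv : (fun h : R => h^-1 *: ((f \o shift w) (h *: d) - f w)) @ 0^' --> 'D_d f w
  by exact: der.
have cv' : (fun h : R => h^-1 *: ((f \o shift w) (h *: d) - f w)) @ 0^'+ --> 'D_d f w.
  apply: cvg_trans cv => P; rewrite /= !near_simpl !near_withinE.
  apply: filterS => h Ph hpos; apply: Ph; by rewrite gt_eqF.

rewrite addrC -lerBrDr.
apply: (cvgr_to_le cv').
near=> h.
have h0 : 0 < h by near: h; exact: nbhs_right_gt.
have h1 : h < 1 by near: h; exact: nbhs_right_lt.
pose t := interval_inference.Itv01 (ltW h0) (ltW h1).
have := cf t v w (in_setT _) (in_setT _).
have -> : @conv R (convex_lmodType 'rV[R]_n) t v w = h *: d + w.
  by rewrite /conv /= /d /unstable.onem scalerBl scale1r scalerBr addrA [RHS]addrAC.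
rewrite /= convRE /= /unstable.onem mulrBl mul1r => H.
rewrite -[X in X <= _]/(h^-1 * (f (h *: d + w) - f w)).
rewrite ler_pdivrMl //.
rewrite mulrBr; lra.
Unshelve. all: by end_near.
Qed.

Theorem mainTheorem4 (R : realType) (n : nat)
  (X : set 'rV[R]_n) (f : 'rV[R]_n -> R) (gradf : 'rV[R]_n -> 'rV[R]_n)
  (eps : R) (x y z : nat -> 'rV[R]_n) (L gam beta eta : nat -> R) :
  (* problem data *)
  X !=set0 -> compact X -> convex_set X ->
  convex_function setT f ->
  (forall w, differentiable f w) ->
  (forall w v, 'D_v f w = dotv (gradf w) v) ->
  (* UCGS iterates *)
  0 < eps ->
  X (x 0%N) -> y 0%N = x 0%N ->
  (forall k, (1 <= k)%N -> 0 < beta k /\ 0 < eta k) ->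
  (forall k, (1 <= k)%N -> 0 < L k) ->
  gam 1%N = 1 ->
  (forall k, (2 <= k)%N ->
     [/\ 0 < gam k, gam k <= 1 &
         L k * gam k ^+ 2 / k%:R = Gam L gam k.-1 * (1 - gam k)]) ->
  (forall k, (1 <= k)%N -> z k = (1 - gam k) *: y k.-1 + gam k *: x k.-1) ->
  (forall k, (1 <= k)%N ->
     ACGM_output X (gradf (z k)) (x k.-1) (beta k) (eta k) (x k)) ->
  (forall k, (1 <= k)%N -> y k = (1 - gam k) *: y k.-1 + gam k *: x k) ->
  (forall k, (1 <= k)%N ->
     f (y k) <= f (z k) + dotv (gradf (z k)) (y k - z k)
                + L k / 2 * sqnorm (y k - z k) + eps / 2 * gam k) ->
  (* parameter condition *)
  (forall k, (1 <= k)%N -> L k * gam k <= beta k) ->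
  forall k, (1 <= k)%N -> forall u, X u ->
    f (y k) - Gam L gam k * \sum_(1 <= i < k.+1)
                 gam i / Gam L gam i * (f (z i) + dotv (gradf (z i)) (u - z i))
    <= eps / 2
       + Gam L gam k * \sum_(1 <= i < k.+1)
           gam i * beta i / (2 * Gam L gam i)
             * (sqnorm (u - x i.-1) - sqnorm (u - x i))
       + Gam L gam k * \sum_(1 <= i < k.+1) gam i * eta i / Gam L gam i.
Proof.
move=> _ _ _ cf df Df eps0 X0 y0 Hbe HL g1 Hg Hz Hx Hy Hsm Hpar.
have gpos : forall i, (1 <= i)%N -> 0 < gam i /\ gam i <= 1.
  move=> [|[|i]] // _; first by rewrite g1 ltr01 lexx.
  by have [? ? _] := Hg i.+2 isT.
have Gpos : forall i, (1 <= i)%N -> 0 < Gam L gam i.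
  move=> i i1; rewrite /Gam; apply: divr_gt0; last by rewrite ltr0n.
  by apply: mulr_gt0; [exact: HL | apply: exprn_gt0; case: (gpos i i1)].
have Grec : forall i, (2 <= i)%N -> Gam L gam i = Gam L gam i.-1 * (1 - gam i).
  by move=> i i2; have [_ _ <-] := Hg i i2.
move=> k k1 u Xu.
pose A i := f (z i) + dotv (gradf (z i)) (u - z i)
   + beta i / 2 * (sqnorm (u - x i.-1) - sqnorm (u - x i)) + eta i + eps / 2.
have step : forall i, (1 <= i)%N -> f (y i) <= (1 - gam i) * f (y i.-1) + gam i * A i.
  move=> i i1.
  have [gi0 gi1] := gpos i i1.
  have E1 : y i - z i = gam i *: (x i - x i.-1) by rewrite Hy // Hz // vec_diff.
  have E2 : dotv (gradf (z i)) (y i - z i) = (1 - gam i) * dotv (gradf (z i)) (y i.-1 - z i)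
     + gam i * (dotv (gradf (z i)) (x i - u) + dotv (gradf (z i)) (u - z i)).
    by rewrite {1}(Hy i i1) (@dot_decomp _ _ _ _ _ u).
  have := Hsm i i1; rewrite E2 E1 sqnormZ => H1.
  have H2 := @grad_ineq _ _ f gradf cf df Df (z i) (y i.-1).
  have H3 := ACGM_ineq (Hx i i1) u Xu.
  have T3 := three_pt (x i) (x i.-1) u.
  have N0 := sqnorm_ge0 (x i - x i.-1).
  have Hp := Hpar i i1.
  have P2 := ler_wpM2l (ltac:(lra) : 0 <= 1 - gam i) H2.
  have P3 := ler_wpM2l (ltac:(lra) : 0 <= gam i) H3.
  have P4 : gam i * (L i * gam i) * sqnorm (x i - x i.-1) <= gam i * beta i * sqnorm (x i - x i.-1).
    by apply: ler_wpM2r => //; apply: ler_wpM2l => //; lra.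
  have Q : gam i * (beta i * dotv (x i - x i.-1) (x i - u)) =
     gam i * beta i * (sqnorm (u - x i) + sqnorm (x i - x i.-1) - sqnorm (u - x i.-1)) / 2.
    by rewrite -T3; field.
  rewrite /A.
  move: H1 P2 P3 P4 Q.
  set fy := f (y i); set fy' := f (y i.-1); set fz := f (z i).
  set a := dotv _ (y i.-1 - z i); set b := dotv _ (x i - u); set c := dotv _ (u - z i).
  set dd := dotv _ _; set N := sqnorm _; set D := sqnorm (u - x i); set D' := sqnorm _.
  move=> *; nra.
have Gne0 : forall i, (1 <= i)%N -> Gam L gam i != 0 by move=> i i1; rewrite gt_eqF // Gpos.
have sumG : forall j, (1 <= j)%N ->
    \sum_(1 <= i < j.+1) gam i / Gam L gam i = (Gam L gam j)^-1.
  elim=> [//|[|j] IH _]; first by rewrite big_nat1 g1 mul1r.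
  rewrite big_nat_recr //= IH // (Grec j.+2 isT) /=.
  have G2 := Gpos j.+2 isT; rewrite (Grec j.+2 isT) /= in G2.
  have Gk := Gpos j.+1 isT.
  have g2 : 1 - gam j.+2 != 0.
    by apply/eqP => h; rewrite h mulr0 ltxx in G2.
  by field; rewrite g2 Gne0.
have main : forall j, (1 <= j)%N ->
    f (y j) / Gam L gam j <= \sum_(1 <= i < j.+1) gam i / Gam L gam i * A i.
  elim=> [//|[|j] IH _].
    rewrite big_nat1 g1 mul1r; have := step 1%N isT; rewrite g1 subrr mul0r add0r mul1r => H.
    by rewrite mulrC; apply: ler_wpM2l => //; rewrite invr_ge0 ltW // Gpos.
  rewrite big_nat_recr //=.
  have IH' := IH isT.
  have H := step j.+2 isT; rewrite /= in H.
  have G2 := Gpos j.+2 isT.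
  have H' : f (y j.+2) / Gam L gam j.+2 <=
      ((1 - gam j.+2) * f (y j.+1) + gam j.+2 * A j.+2) / Gam L gam j.+2.
    by apply: ler_wpM2r => //; rewrite invr_ge0 ltW.
  have E : ((1 - gam j.+2) * f (y j.+1) + gam j.+2 * A j.+2) / Gam L gam j.+2
      = f (y j.+1) / Gam L gam j.+1 + gam j.+2 / Gam L gam j.+2 * A j.+2.
    rewrite (Grec j.+2 isT) /=; rewrite (Grec j.+2 isT) /= in G2.
    have Gk := Gne0 j.+1 isT.
    have g2 : 1 - gam j.+2 != 0.
      by apply/eqP => h; rewrite h mulr0 ltxx in G2.
    by field; rewrite g2 Gk.
  lra.
have Hf : f (y k) <= Gam L gam k * \sum_(1 <= i < k.+1) gam i / Gam L gam i * A i.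
  have := main k k1; have Gk := Gpos k k1.
  rewrite ler_pdivrMr // mulrC //.
have Hs : \sum_(1 <= i < k.+1) gam i / Gam L gam i * A i =
   \sum_(1 <= i < k.+1) gam i / Gam L gam i * (f (z i) + dotv (gradf (z i)) (u - z i))
   + \sum_(1 <= i < k.+1) gam i * beta i / (2 * Gam L gam i)
             * (sqnorm (u - x i.-1) - sqnorm (u - x i))
   + \sum_(1 <= i < k.+1) gam i * eta i / Gam L gam i
   + eps / 2 * \sum_(1 <= i < k.+1) gam i / Gam L gam i.
  rewrite mulr_sumr -!big_split /=; apply: eq_big_nat => i /andP[i1 _].
  rewrite /A; have := Gne0 i i1 => Gi.
  by field; rewrite Gi.
rewrite Hs sumG // !mulrDr in Hf.
have Gk := Gne0 k k1.
have E : Gam L gam k * (eps / 2 * (Gam L gam k)^-1) = eps / 2 by field.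
rewrite E in Hf.
lra.
Qed.
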